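(* For every $n\in\mathbb{N}$, $F(\mathbb{A}^{(n)})\cong\mathbb{A}^n$, and $F(\mathbb{A}^{( * )})\cong\mathbb{A}^*$, as nominal $\mathrm{Sb}$-sets.
   Context: $\mathbb{A}$ is a countably infinite set of atoms; $\mathrm{Sb}$ is the monoid of functions $\mathbb{A}\to\mathbb{A}$ that are the identity outside a finite set, $\mathrm{Perm}$ its bijections. $\mathbb{A}$ is a nominal $\mathrm{Sb}$-set (and $\mathrm{Perm}$-set) via $m\cdot a=m(a)$. $\mathbb{A}^{(n)}$ is the nominal $\mathrm{Perm}$-set of words of length $n$ with pairwise distinct letters, $\mathbb{A}^{( * )}=\coprod_n\mathbb{A}^{(n)}$; $\mathbb{A}^n$ and $\mathbb{A}^*=\coprod_n\mathbb{A}^n$ carry the pointwise $\mathrm{Sb}$-action. For a nominal $\mathrm{Perm}$-set $X$ (every element $x$ has a finite set $C$ with $g|_C=g'|_C\Rightarrow gx=g'x$), $F(X)=(\mathrm{Sb}\times X)/{\sim}$, where $\sim$ is the least equivalence containing $(m,gx)\sim(mg,x)$ for $g\in\mathrm{Perm}$ and $(m,x)\sim(m',x)$ whenever $m|_C=m'|_C$ for such a support $C$ of $x$; the $\mathrm{Sb}$-action is $n\cdot[m,x]=[nm,x]$. *)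

(* Defs.v *)
From mathcomp Require Import all_boot.
From Stdlib Require Import Relations.
Set Implicit Arguments. Unset Strict Implicit. Unset Printing Implicit Defensive.

Definition atom := nat.

Definition fin_id (m : atom -> atom) : Prop :=
  exists s : seq atom, forall a, a \notin s -> m a = a.

Definition Sb := {m : atom -> atom | fin_id m}.

Lemma fin_id_comp (m m' : atom -> atom) : fin_id m -> fin_id m' -> fin_id (m \o m').
Proof.
move=> [s Hs] [s' Hs']; exists (s ++ s') => a; rewrite mem_cat negb_or => /andP[a1 a2].
by rewrite /= Hs' // Hs.
Qed.

Definition sb_comp (m m' : Sb) : Sb :=
  exist _ (proj1_sig m \o proj1_sig m') (fin_id_comp (proj2_sig m) (proj2_sig m')).

Definition Perm := {g : Sb | bijective (proj1_sig g)}.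
Definition pfun (g : Perm) : atom -> atom := proj1_sig (proj1_sig g).

Definition is_support (X : Type) (pact : Perm -> X -> X) (C : seq atom) (x : X) :=
  forall g g' : Perm, {in C, pfun g =1 pfun g'} -> pact g x = pact g' x.

Inductive Fgen (X : Type) (pact : Perm -> X -> X) : Sb * X -> Sb * X -> Prop :=
| Fgen_perm (m : Sb) (g : Perm) (x : X) :
    Fgen pact (m, pact g x) (sb_comp m (proj1_sig g), x)
| Fgen_supp (m m' : Sb) (x : X) (C : seq atom) :
    is_support pact C x -> {in C, proj1_sig m =1 proj1_sig m'} ->
    Fgen pact (m, x) (m', x).

Definition Fsim (X : Type) (pact : Perm -> X -> X) : relation (Sb * X) :=
  clos_refl_sym_trans _ (Fgen pact).

(* F(X) = (Sb * X)/~ with action n.[m,x] = [n m, x] is isomorphic, as an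
   Sb-set, to (Y, sact): there is a map f : Sb * X -> Y whose kernel is
   exactly ~ (so it induces a well-defined injection F(X) -> Y), which is
   surjective and Sb-equivariant. *)
Definition F_iso (X : Type) (pact : Perm -> X -> X) (Y : Type) (sact : Sb -> Y -> Y) : Prop :=
  exists f : Sb * X -> Y,
    [/\ (forall p q, f p = f q <-> Fsim pact p q),
        (forall y, exists p, f p = y) &
        (forall (k m : Sb) (x : X), f (sb_comp k m, x) = sact k (f (m, x)))].

Definition An (n : nat) := n.-tuple atom.
Definition sb_act_An (n : nat) (m : Sb) (t : An n) : An n := map_tuple (proj1_sig m) t.

Definition sb_act_Astar (m : Sb) (s : seq atom) : seq atom := map (proj1_sig m) s.

Definition Adn (n : nat) := {t : n.-tuple atom | uniq t}.

Lemma perm_uniq (g : Perm) (s : seq atom) : uniq s -> uniq (map (pfun g) s).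
Proof.
move=> u; rewrite map_inj_uniq //; apply: bij_inj; exact: (proj2_sig g).
Qed.

Definition perm_act_Adn (n : nat) (g : Perm) (t : Adn n) : Adn n :=
  exist _ (map_tuple (pfun g) (proj1_sig t))
    (perm_uniq g (proj2_sig t)).

(* A^(star) = coproduct of the A^(n): duplicate-free words of any length *)
Definition Adstar := {s : seq atom | uniq s}.

Definition perm_act_Adstar (g : Perm) (s : Adstar) : Adstar :=
  exist _ (map (pfun g) (proj1_sig s)) (perm_uniq g (proj2_sig s)).

(* Main.v *)
Require Import Defs.
From mathcomp Require Import all_boot.
From Stdlib Require Import Relations.

Definition swapf (a b : atom) (c : atom) : atom :=
  if c == a then b else if c == b then a else c.

Lemma swapf_fin a b : fin_id (swapf a b).
Proof.
exists [:: a; b] => c; rewrite /swapf !inE negb_or => /andP[/negbTE -> /negbTE ->] //.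
Qed.

Lemma swapfK a b : cancel (swapf a b) (swapf a b).
Proof.
move=> c; rewrite /swapf.
case: (eqVneq c a) => [->|ca].
  by rewrite eqxx; case: (eqVneq b a) => [->|] //; rewrite eqxx.
case: (eqVneq c b) => [->|cb]; first by rewrite eqxx.
by rewrite (negbTE ca) (negbTE cb).
Qed.

Definition swapSb a b : Sb := exist _ (swapf a b) (swapf_fin a b).
Definition swapP a b : Perm :=
  exist _ (swapSb a b) (Bijective (swapfK a b) (swapfK a b)).

Lemma id_fin : fin_id id. Proof. by exists [::]. Qed.
Definition idSb : Sb := exist _ id id_fin.
Definition idP' : Perm := exist _ idSb (Bijective (fun x : atom => erefl x) (fun x : atom => erefl x)).

Definition compP (g h : Perm) : Perm :=
  exist _ (sb_comp (proj1_sig g) (proj1_sig h)) (bij_comp (proj2_sig g) (proj2_sig h)).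

Lemma perm_ext_seq (x' x : seq atom) : uniq x -> uniq x' -> size x = size x' ->
  exists g : Perm, map (pfun g) x' = x.
Proof.
elim: x' x => [|a' r' IH] [|a r] //=.
  by move=> _ _ _; exists idP'.
move=> /andP[ar ur] /andP[ar' ur'] [sz].
have [h Hh] := IH r ur ur' sz.
exists (compP (swapP (pfun h a') a) h).
rewrite /pfun /= /swapf eqxx; congr cons.
rewrite -[RHS]Hh; apply/eq_in_map => c cr /=.
have hc : pfun h c \in r by rewrite -Hh map_f.
have n1 : pfun h c != pfun h a'.
  apply/negP => /eqP E; have := bij_inj (proj2_sig h) E => ca.
  by move: ar'; rewrite -ca cr.
have n2 : pfun h c != a by apply/negP => /eqP E; move: ar; rewrite -E hc.
by rewrite /pfun in n1 n2; rewrite (negbTE n1) (negbTE n2).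
Qed.

Lemma support_sub (C x : seq atom) :
  (forall g g' : Perm, {in C, pfun g =1 pfun g'} -> map (pfun g) x = map (pfun g') x) ->
  {subset x <= C}.
Proof.
move=> H a ax; apply/negPn/negP => aC.
set b := (sumn (C ++ x)).+1.
have big : forall c, c \in C ++ x -> c < b.
  move=> c; rewrite /b ltnS; elim: (C ++ x) => //= d s IHs.
  rewrite inE => /orP[/eqP ->|/IHs]; first exact: leq_addr.
  by move=> h; apply: leq_trans h (leq_addl _ _).
have E := H (swapP a b) idP'.
have : map (pfun (swapP a b)) x = map (pfun idP') x.
  apply: E => c cC; rewrite /pfun /= /swapf.
  have -> : (c == a) = false by apply/negbTE/negP => /eqP E'; move: aC; rewrite -E' cC.
  have -> : (c == b) = false.
    apply/negbTE; rewrite neq_ltn big //; by rewrite mem_cat cC.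
  by [].
move=> /(congr1 (fun s => b \in s)).
have -> : b \in map (pfun (swapP a b)) x.
  by apply/mapP; exists a => //; rewrite /pfun /= /swapf eqxx.
rewrite map_id => bx.
have := big b; rewrite mem_cat -bx orbT ltnn => /(_ isT) //.
Qed.

Section Kernel.
Variables (X : Type) (pact : Perm -> X -> X) (v : X -> seq atom).
Hypotheses (hv : forall g x, v (pact g x) = map (pfun g) (v x))
  (vinj : injective v) (vu : forall x, uniq (v x)).

Lemma kernel (p q : Sb * X) :
  map (proj1_sig p.1) (v p.2) = map (proj1_sig q.1) (v q.2) <-> Fsim pact p q.
Proof.
split.
- case: p q => m x [m' x'] /= E.
  have sz : size (v x) = size (v x') by rewrite -(size_map (proj1_sig m)) E size_map.
  have [g Hg] := @perm_ext_seq (v x') (v x) (vu x) (vu x') sz.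
  have Ex : pact g x' = x by apply: vinj; rewrite hv.
  rewrite -Ex; apply: (rst_trans _ _ _ (sb_comp m (proj1_sig g), x')).
    by apply: rst_step; apply: Fgen_perm.
  apply: rst_step; apply: (@Fgen_supp _ _ _ _ _ (v x')).
    move=> g1 g2 H12; apply: vinj; rewrite !hv; exact/eq_in_map.
  apply/eq_in_map; rewrite -E -Hg -map_comp; by [].
- elim.
  + move=> {}p {}q G; case: G => [m g x | m m' x C HC Hm] /=.
      by rewrite hv -map_comp.
    apply/eq_in_map => a ax; apply: Hm.
    apply: (@support_sub _ (v x)) ax => g g' Hgg.
    by rewrite -!hv; congr v; apply: HC.
  + by [].
  + by move=> {}p {}q _ IH; rewrite IH.
  + by move=> {}p {}q r _ IH1 _ IH2; rewrite IH1 IH2.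
Qed.
End Kernel.

Lemma mk_fin n (t : seq atom) :
  fin_id (fun a => if a < n then nth 0 t a else a).
Proof.
exists (iota 0 n) => a; rewrite mem_iota /= add0n => /negbTE -> //.
Qed.

Lemma mk_map n (t : seq atom) : size t = n ->
  map (fun a => if a < n then nth 0 t a else a) (iota 0 n) = t.
Proof.
move=> <-; rewrite -[RHS](mkseq_nth 0); apply/eq_in_map => a.
by rewrite mem_iota /= add0n => ->.
Qed.

Theorem mainTheorem8 :
  (forall n : nat, F_iso (@perm_act_Adn n) (@sb_act_An n)) /\
  F_iso perm_act_Adstar sb_act_Astar.
Proof.
split.
- move=> n.
  exists (fun p => map_tuple (proj1_sig p.1) (proj1_sig p.2)); split.
  + move=> p q.
    have K := @kernel _ (@perm_act_Adn n) (fun x : Adn n => val (proj1_sig x))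
      (fun g x => erefl) (fun x y E => val_inj (val_inj E)) (fun x => proj2_sig x) p q.
    split => [E|H]; first by apply/K; exact: (congr1 val E).
    by apply: val_inj; apply/K.
  + move=> y.
    have Hs : size (iota 0 n) == n by rewrite size_iota.
    exists (exist _ (fun a => if a < n then nth 0 y a else a) (mk_fin n y),
            exist _ (Tuple Hs) (iota_uniq 0 n) : Adn n).
    by apply: val_inj; rewrite /= mk_map // size_tuple.
  + move=> k m x; apply: val_inj; by rewrite /sb_act_An /= -map_comp.
- exists (fun p => map (proj1_sig p.1) (proj1_sig p.2)); split.
  + move=> p q.
    exact: (@kernel _ perm_act_Adstar (fun x : Adstar => proj1_sig x)
      (fun g x => erefl) (fun x y E => val_inj E) (fun x => proj2_sig x) p q).
  + move=> y.
    exists (exist _ (fun a => if a < size y then nth 0 y a else a) (mk_fin (size y) y),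
            exist _ (iota 0 (size y)) (iota_uniq 0 (size y)) : Adstar).
    by rewrite /= mk_map.
  + by move=> k m x; rewrite /sb_act_Astar /= -map_comp.
Qed.
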